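(* Let $\alpha>0$, $h>0$, $D_x>0$, $D_y>0$, $A>0$, and let $x_m\sim\mathrm{Unif}[0,D_x]$, $y_m\sim\mathrm{Unif}[-D_y/2,D_y/2]$ be independent. Then the average rate $R_p=\mathbb{E}\left[\log_2\left(1+\frac{Ae^{-\alpha x_m}}{y_m^2+h^2}\right)\right]$ equals $$R_p=\frac{1}{D_xD_y}\Bigg(\frac{D_y}{\alpha\ln 2}\left(\mathrm{Li}_2\!\left(\frac{-Ae^{-\alpha D_x}}{h^2+\frac{D_y^2}{4}}\right)-\mathrm{Li}_2\!\left(\frac{-A}{h^2+\frac{D_y^2}{4}}\right)\right)-\frac{4hD_x}{\ln 2}\tan^{-1}\!\left(\frac{D_y}{2h}\right)-\frac{8}{\alpha\ln 2}\Big[F(x)\Big]_{\sqrt{A+h^2}}^{\sqrt{Ae^{-\alpha D_x}+h^2}}\Bigg),$$ where $[F(x)]_a^b=F(b)-F(a)$ and, for $x>h$, $$F(x)=\frac{D_y}{4}\ln\left(\frac{D_y^2}{4}+x^2\right)+x\tan^{-1}\!\left(\frac{D_y}{2x}\right)+\frac{h}{2}\tan^{-1}\!\left(\frac{D_y}{2x}\right)\ln\left(\frac{x-h}{x+h}\right)+\frac{h}{4}\big(z(x,h)-z(x,-h)\big),$$ $$z(x,y)=2\ln(x-y)\left(\tan^{-1}\!\left(\frac{2x}{D_y}\right)-\tan^{-1}\!\left(\frac{2y}{D_y}\right)\right)+2\,\mathrm{Im}\left\{\mathrm{Li}_2\!\left(\frac{y-x}{y-j\frac{D_y}{2}}\r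ight)\right\}.$$
   Context: This is the ergodic rate of a single-pinching-antenna system where the antenna is placed at $x_p=x_m$ directly above the user's $x$-coordinate on a waveguide at height $h$ with absorption coefficient $\alpha$; $A=\frac{\eta P_t}{\sigma^2}$ with $\eta,P_t,\sigma^2>0$. $\mathrm{Li}_2$ is the dilogarithm, $\mathrm{Li}_2(w)=-\int_0^w\frac{\ln(1-u)}{u}\,du$ (principal branch for complex arguments), $j$ is the imaginary unit, and $\mathrm{Im}$ denotes the imaginary part. *)

(* Defs.v *)
From Stdlib Require Import Reals.
From Coquelicot Require Import Coquelicot.
Open Scope R_scope.

(* Principal argument of a complex number u + i v, with values in (-PI, PI]
   (the usual atan2; arbitrary value 0 at the origin). *)
Definition Carg (z : Complex.C) : R :=
  let u := fst z in let v := snd z in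
  if Rlt_dec 0 u then atan (v / u)
  else if Rlt_dec u 0 then
    (if Rle_dec 0 v then atan (v / u) + PI else atan (v / u) - PI)
  else if Rlt_dec 0 v then PI / 2
  else if Rlt_dec v 0 then - (PI / 2) else 0.

Definition Clog (z : Complex.C) : Complex.C := (ln (Cmod z), Carg z).

(* Dilogarithm (principal branch): Li2(w) = - int_0^w ln(1-u)/u du, the
   integral taken along the straight segment u = t w, t in [0,1], i.e.
   Li2(w) = - int_0^1 Log(1 - t w) / t dt (real and imaginary
   parts integrated separately).  This is the principal branch for
   every w outside [1, +oo). *)
Definition Li2 (w : Complex.C) : Complex.C :=
  let L := fun t : R => Clog (Cminus (RtoC 1) (Cmult (RtoC t) w)) in
  (- RInt (fun t : R => Re (L t) / t) 0 1,
   - RInt (fun t : R => Im (L t) / t) 0 1).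

Definition log2 (x : R) : R := ln x / ln 2.

Definition zfun (Dy x y : R) : R :=
  2 * ln (x - y) * (atan (2 * x / Dy) - atan (2 * y / Dy))
  + 2 * Im (Li2 (Cdiv (RtoC (y - x)) (y, - (Dy / 2)))).

Definition Ffun (Dy h x : R) : R :=
  Dy / 4 * ln (Dy ^ 2 / 4 + x ^ 2)
  + x * atan (Dy / (2 * x))
  + h / 2 * atan (Dy / (2 * x)) * ln ((x - h) / (x + h))
  + h / 4 * (zfun Dy x h - zfun Dy x (- h)).

(* Main.v *)
Require Import Defs.
From Stdlib Require Import Reals Lra.
From Coquelicot Require Import Coquelicot.
Open Scope R_scope.

Lemma atan_diff (p q : R) : q < p ->
  PI/2 - atan ((1 + p*q)/(p - q)) = atan p - atan q.
Proof.
  intros Hpq.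
  set (th := PI/2 - (atan p - atan q)).
  assert (Hb : - (PI/2) < th < PI/2).
  { pose proof (atan_bound p); pose proof (atan_bound q).
    pose proof (atan_increasing q p Hpq). unfold th. lra. }
  assert (Ht : tan th = (1 + p*q)/(p - q)).
  { unfold tan, th. rewrite sin_shift, cos_shift, cos_minus, sin_minus.
    rewrite !sin_atan, !cos_atan.
    assert (H1 : 0 < sqrt (1 + p²)) by (apply sqrt_lt_R0; unfold Rsqr; nra).
    assert (H2 : 0 < sqrt (1 + q²)) by (apply sqrt_lt_R0; unfold Rsqr; nra).
    field. split; [lra|]. split; lra. }
  rewrite <- Ht, atan_tan by exact Hb. unfold th. ring.
Qed.

Lemma Carg_re_pos (u v : R) : 0 < u -> Carg (u, v) = atan (v / u).
Proof. intros H. unfold Carg; simpl. destruct (Rlt_dec 0 u); [reflexivity|lra]. Qed.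

Lemma Carg_im_pos (u v : R) : 0 < v -> Carg (u, v) = PI/2 - atan (u / v).
Proof.
  intros H. unfold Carg; simpl.
  destruct (Rlt_dec 0 u).
  - replace (v/u) with (/ (u/v)) by (field; lra).
    apply atan_inv. apply Rdiv_lt_0_compat; lra.
  - destruct (Rlt_dec u 0).
    + destruct (Rle_dec 0 v); [|lra].
      replace (v/u) with (- / (-u/v)) by (field; lra).
      rewrite atan_opp, atan_inv by (apply Rdiv_lt_0_compat; lra).
      replace (-u/v) with (-(u/v)) by (field; lra). rewrite atan_opp. lra.
    + assert (u = 0) by lra. subst.
      destruct (Rlt_dec 0 v); [|lra].
      replace (0/v) with 0 by (field; lra). rewrite atan_0. ring.
Qed.

Lemma locally_R (x : R) (P : R -> Prop) (eps : R) :
  0 < eps -> (forall y, Rabs (y - x) < eps -> P y) -> locally x P.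
Proof.
  intros He H. exists (mkposreal eps He). intros y Hy. apply H. exact Hy.
Qed.

Lemma loc_pos (g : R -> R) (x : R) :
  continuous g x -> 0 < g x -> locally x (fun y => 0 < g y).
Proof.
  intros Hc Hp. apply Hc. apply (open_gt 0 (g x) Hp).
Qed.

Lemma loc_neq (x : R) : x <> 0 -> locally x (fun y => y <> 0).
Proof.
  intros H. apply (locally_R x _ (Rabs x)). apply Rabs_pos_lt; auto.
  intros y Hy Hy0. subst. rewrite Rminus_0_l, Rabs_Ropp in Hy. lra.
Qed.

Lemma remov (phi : R -> R) (b : R) :
  phi 0 = 0 -> ex_derive phi 0 ->
  (forall u, Rmin 0 b <= u <= Rmax 0 b -> u <> 0 -> continuous phi u) ->
  ex_RInt (fun u => phi u / u) 0 b.
Proof.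
  intros H0 [l Hd] Hc.
  set (g := fun u => if Req_EM_T u 0 then l else phi u / u).
  apply (ex_RInt_ext g).
  { intros x Hx. unfold g. destruct (Req_EM_T x 0); [|reflexivity].
    subst. exfalso. unfold Rmin, Rmax in Hx. destruct (Rle_dec 0 b); lra. }
  apply (ex_RInt_continuous (V:=R_CompleteNormedModule)). intros z Hz.
  destruct (Req_EM_T z 0) as [Ez|Ez].
  - subst z. apply is_derive_Reals in Hd.
    intros P [eps HP]. unfold filtermap.
    destruct (Hd eps (cond_pos eps)) as [del Hdel].
    exists del. intros y Hy. apply HP.
    unfold g. destruct (Req_EM_T y 0) as [Ey|Ey].
    + destruct (Req_EM_T 0 0); [|congruence]. apply ball_center.
    + destruct (Req_EM_T 0 0); [|congruence].
      change (Rabs (phi y / y - l) < eps).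
      assert (Hy' : Rabs y < del).
      { change (Rabs (y - 0) < del) in Hy. rewrite Rminus_0_r in Hy. exact Hy. }
      specialize (Hdel y Ey Hy'). rewrite Rplus_0_l, H0, Rminus_0_r in Hdel.
      exact Hdel.
  - apply (continuous_ext_loc _ (fun u => phi u * / u)).
    { generalize (loc_neq z Ez). apply filter_imp. intros y Hy.
      unfold g. destruct (Req_EM_T y 0); [congruence|reflexivity]. }
    apply (continuous_mult phi (fun u => / u)).
    + apply Hc; auto.
    + apply continuous_Rinv; auto.
Qed.

Definition fre (d : C) (u : R) : R := Re (Clog (Cminus (RtoC 1) (Cmult (RtoC u) d))) / u.
Definition fim (d : C) (u : R) : R := Im (Clog (Cminus (RtoC 1) (Cmult (RtoC u) d))) / u.

Lemma Li2_re_sub (w d : C) (r : R) : r <> 0 ->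
  (forall t, Cmult (RtoC t) w = Cmult (RtoC (r*t)) d) ->
  ex_RInt (fre d) 0 r ->
  fst (Li2 w) = - RInt (fre d) 0 r.
Proof.
  intros Hr Hw Hex. unfold Li2; simpl. f_equal.
  replace (RInt (fre d) 0 r) with (RInt (fre d) (r*0+0) (r*1+0)) by (f_equal; ring).
  rewrite <- RInt_comp_lin.
  2: { replace (r*0+0) with 0 by ring. replace (r*1+0) with r by ring. exact Hex. }
  apply RInt_ext. intros x Hx. rewrite Rmin_left in Hx by lra. rewrite Rmax_right in Hx by lra.
  rewrite Hw. unfold fre, scal; simpl. unfold mult; simpl.
  replace (r*x+0) with (r*x) by ring. field. lra.
Qed.

Lemma Li2_im_sub (w d : C) (r : R) : r <> 0 ->
  (forall t, Cmult (RtoC t) w = Cmult (RtoC (r*t)) d) ->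
  ex_RInt (fim d) 0 r ->
  snd (Li2 w) = - RInt (fim d) 0 r.
Proof.
  intros Hr Hw Hex. unfold Li2; simpl. f_equal.
  replace (RInt (fim d) 0 r) with (RInt (fim d) (r*0+0) (r*1+0)) by (f_equal; ring).
  rewrite <- RInt_comp_lin.
  2: { replace (r*0+0) with 0 by ring. replace (r*1+0) with r by ring. exact Hex. }
  apply RInt_ext. intros x Hx. rewrite Rmin_left in Hx by lra. rewrite Rmax_right in Hx by lra.
  rewrite Hw. unfold fim, scal; simpl. unfold mult; simpl.
  replace (r*x+0) with (r*x) by ring. field. lra.
Qed.

Lemma deriv_int (f rr : R -> R) (x dr : R) :
  locally (rr x) (fun b => ex_RInt f 0 b) -> continuous f (rr x) ->
  is_derive rr x dr ->
  is_derive (fun t => RInt f 0 (rr t)) x (dr * f (rr x)).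
Proof.
  intros Hl Hc Hd.
  apply (is_derive_comp (fun b => RInt f 0 b) rr x).
  2: exact Hd.
  apply (is_derive_RInt f (fun b => RInt f 0 b) 0 (rr x)); [|exact Hc].
  generalize Hl. apply filter_imp. intros b Hb. apply (RInt_correct (V:=R_CompleteNormedModule)). exact Hb.
Qed.

Lemma exd_cont (f : R -> R) (x : R) : ex_derive f x -> continuous f x.
Proof. intros H. apply (ex_derive_continuous (K:=R_AbsRing) (V:=R_NormedModule)). exact H. Qed.

Lemma Cmod_pos_real (x y : R) : y = 0 -> 0 < x -> Cmod (x, y) = x.
Proof.
  intros -> Hx. unfold Cmod; simpl. replace (x*(x*1) + 0*(0*1)) with (x*x) by ring.
  apply sqrt_square. lra.
Qed.

Definition phia (u : R) : R := Re (Clog (Cminus (RtoC 1) (Cmult (RtoC u) (RtoC 1)))).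

Lemma phia_eq (u : R) : u < 1 -> phia u = ln (1 - u).
Proof.
  intros H. unfold phia.
  replace (Cminus (RtoC 1) (Cmult (RtoC u) (RtoC 1))) with ((1 - u, 0) : C)
    by (apply injective_projections; simpl; ring).
  unfold Clog, Re; simpl. rewrite Cmod_pos_real by lra. reflexivity.
Qed.

Lemma phia_loc (u : R) : u < 1 -> locally u (fun y => ln (1 - y) = phia y).
Proof.
  intros H. generalize (open_lt 1 u H). apply filter_imp. intros y Hy. rewrite phia_eq; auto.
Qed.

Lemma fre1_ex (b : R) : b < 1 -> ex_RInt (fre (RtoC 1)) 0 b.
Proof.
  intros Hb. apply (remov phia).
  - rewrite phia_eq by lra. replace (1-0) with 1 by ring. apply ln_1.
  - apply (ex_derive_ext_loc (fun y => ln (1 - y))). apply phia_loc; lra.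
    auto_derive. lra.
  - intros u Hu _. apply (continuous_ext_loc _ (fun y => ln (1 - y))).
    apply phia_loc. unfold Rmin, Rmax in Hu. destruct (Rle_dec 0 b); lra.
    apply exd_cont. auto_derive. unfold Rmin, Rmax in Hu. destruct (Rle_dec 0 b); lra.
Qed.

Lemma Ga_deriv (A alpha c x : R) : 0 < A -> 0 < c ->
  is_derive (fun t => fst (Li2 (RtoC (- A * exp (- alpha * t) / c)))) x
     (alpha * ln (1 + A * exp (- alpha * x) / c)).
Proof.
  intros HA Hc.
  set (wa := fun t => - A * exp (- alpha * t) / c).
  assert (Hw : forall t, wa t < 0).
  { intros t. unfold wa. assert (0 < exp (- alpha * t)) by apply exp_pos.
    apply Rdiv_neg_pos; nra. }
  apply (is_derive_ext (fun t => - RInt (fre (RtoC 1)) 0 (wa t))).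
  { intros t. symmetry. apply Li2_re_sub.
    - specialize (Hw t); lra.
    - intros s. unfold wa; apply injective_projections; simpl; ring.
    - apply fre1_ex. specialize (Hw t); lra. }
  replace (alpha * ln (1 + A * exp (- alpha * x) / c))
    with (opp ((- alpha * wa x) * fre (RtoC 1) (wa x))).
  2: { unfold fre. fold (phia (wa x)). rewrite phia_eq by (specialize (Hw x); lra).
       unfold opp; simpl. replace (1 - wa x) with (1 + A * exp (- alpha * x) / c) by (unfold wa; field; lra).
       field. specialize (Hw x); lra. }
  apply (is_derive_opp (fun t => RInt (fre (RtoC 1)) 0 (wa t))).
  apply deriv_int.
  - generalize (open_lt 1 (wa x) ltac:(specialize (Hw x); lra)). apply filter_imp.
    intros b Hb. apply fre1_ex. exact Hb.
  - apply (continuous_ext_loc _ (fun y => ln (1 - y) / y)).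
    + generalize (filter_and (F:=locally (wa x)) _ _ (phia_loc (wa x) ltac:(specialize (Hw x); lra))
                    (open_lt 0 (wa x) (Hw x))).
      apply filter_imp. intros y [H1 H2]. unfold fre. fold (phia y). rewrite <- H1. reflexivity.
    + apply exd_cont. auto_derive. specialize (Hw x); lra.
  - unfold wa. auto_derive; [lra|]. field. lra.
Qed.

Section CaseB.
Lemma zform (y a u : R) : 0 < a ->
  Cminus (RtoC 1) (Cmult (RtoC u) (Cinv (y, -a))) =
  ((1 - u*y/(y^2+a^2), - u*a/(y^2+a^2)) : C).
Proof.
  intros Ha. assert (y^2 + a^2 <> 0) by nra.
  apply injective_projections; simpl; field; nra.
Qed.

Definition phib (y a u : R) : R := Im (Clog (Cminus (RtoC 1) (Cmult (RtoC u) (Cinv (y, -a))))).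

Lemma phib_neg (y a u : R) : 0 < a -> u < 0 ->
  phib y a u = PI/2 - atan ((1 - u*y/(y^2+a^2)) / (- u*a/(y^2+a^2))).
Proof.
  intros Ha Hu. unfold phib. rewrite zform by lra. unfold Clog, Im; simpl.
  apply Carg_im_pos. assert (0 < y^2+a^2) by nra.
  apply Rdiv_lt_0_compat; nra.
Qed.

Lemma phib_Upos (y a u : R) : 0 < a -> 0 < 1 - u*y/(y^2+a^2) ->
  phib y a u = atan ((- u*a/(y^2+a^2)) / (1 - u*y/(y^2+a^2))).
Proof.
  intros Ha Hu. unfold phib. rewrite zform by lra. unfold Clog, Im; simpl.
  apply Carg_re_pos. exact Hu.
Qed.

Lemma fimb_ex (y a b : R) : 0 < a -> b < 0 -> ex_RInt (fim (Cinv (y, -a))) 0 b.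
Proof.
  intros Ha Hb. assert (Hn : 0 < y^2+a^2) by nra.
  apply (remov (phib y a)).
  - rewrite phib_Upos by (try lra; replace (1 - 0*y/(y^2+a^2)) with 1 by (field; lra); lra).
    replace (- 0 * a / (y ^ 2 + a ^ 2) / (1 - 0 * y / (y ^ 2 + a ^ 2))) with 0 by (field; lra).
    apply atan_0.
  - apply (ex_derive_ext_loc (fun u => atan ((- u*a/(y^2+a^2)) / (1 - u*y/(y^2+a^2))))).
    + assert (Hc : continuous (fun u => 1 - u*y/(y^2+a^2)) 0) by (apply exd_cont; auto_derive; lra).
      generalize (loc_pos _ 0 Hc ltac:(replace (1 - 0*y/(y^2+a^2)) with 1 by (field; lra); lra)).
      apply filter_imp. intros u Hu. rewrite phib_Upos; auto.
    + auto_derive. replace (1 - 0*y/(y^2+a^2)) with 1 by (field; lra). lra.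
  - intros u Hu Hu0. assert (Hu' : u < 0).
    { unfold Rmin, Rmax in Hu. destruct (Rle_dec 0 b); lra. }
    apply (continuous_ext_loc _ (fun u => PI/2 - atan ((1 - u*y/(y^2+a^2)) / (- u*a/(y^2+a^2))))).
    + generalize (open_lt 0 u Hu'). apply filter_imp. intros v Hv. rewrite phib_neg; auto.
    + apply exd_cont. auto_derive. apply Rgt_not_eq; apply Rmult_lt_0_compat; [nra | apply Rinv_0_lt_compat; nra].
Qed.

Lemma Qb_deriv (y a x : R) : 0 < a -> y < x ->
  is_derive (fun t => snd (Li2 (Cdiv (RtoC (y - t)) (y, -a)))) x
    ((atan (x/a) - atan (y/a)) / (y - x)).
Proof.
  intros Ha Hx. assert (Hn : 0 < y^2+a^2) by nra.
  set (d := Cinv (y, -a)).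
  apply (is_derive_ext_loc (fun t => - RInt (fim d) 0 (y - t))).
  { generalize (open_gt y x Hx). apply filter_imp. intros t Ht. symmetry.
    apply Li2_im_sub.
    - lra.
    - intros s. unfold Cdiv, d. apply injective_projections; simpl; field; nra.
    - apply fimb_ex; lra. }
  replace ((atan (x/a) - atan (y/a)) / (y - x)) with (- (-1 * fim d (y - x))).
  2: { unfold fim, d. fold (phib y a (y - x)). rewrite phib_neg by lra.
       rewrite <- (atan_diff (x/a) (y/a)).
       2: { apply Rmult_lt_compat_r; [apply Rinv_0_lt_compat; lra| lra]. }
       replace ((1 - (y - x) * y / (y ^ 2 + a ^ 2)) / (- (y - x) * a / (y ^ 2 + a ^ 2)))
         with ((1 + x / a * (y / a)) / (x / a - y / a)) by (field; repeat split; lra).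
       field. lra. }
  apply (is_derive_opp (fun t => RInt (fim d) 0 (y - t))).
  apply (deriv_int _ (fun t => y - t)).
  - generalize (open_lt 0 (y - x) ltac:(lra)). apply filter_imp.
    intros b Hb. apply fimb_ex; lra.
  - apply (continuous_ext_loc _
      (fun u => (PI/2 - atan ((1 - u*y/(y^2+a^2)) / (- u*a/(y^2+a^2)))) / u)).
    + generalize (open_lt 0 (y - x) ltac:(lra)). apply filter_imp.
      intros v Hv. unfold fim, d. fold (phib y a v). rewrite phib_neg; auto.
    + apply exd_cont. auto_derive. split; [|lra]. apply Rgt_not_eq; apply Rmult_lt_0_compat; [nra | apply Rinv_0_lt_compat; nra].
  - auto_derive; [exact I|]. ring.
Qed.
End CaseB.

Lemma comb3 (E g1 g2 : R -> R) (x k dE d1 d2 : R) :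
  is_derive E x dE -> is_derive g1 x d1 -> is_derive g2 x d2 ->
  is_derive (fun t => E t + k * (2 * g1 t - 2 * g2 t)) x (dE + k * (2 * d1 - 2 * d2)).
Proof.
  intros H1 H2 H3.
  apply (is_derive_plus E (fun t => k * (2 * g1 t - 2 * g2 t))); [exact H1|].
  apply is_derive_scal.
  apply (is_derive_minus (fun t => 2 * g1 t) (fun t => 2 * g2 t)); apply is_derive_scal; assumption.
Qed.

Lemma F_deriv (Dy h x : R) : 0 < Dy -> 0 < h -> h < x ->
  is_derive (Ffun Dy h) x (x^2 * atan (Dy/(2*x)) / (x^2 - h^2)).
Proof.
  intros HDy Hh Hx.
  set (Qh := fun t => snd (Li2 (Cdiv (RtoC (h - t)) (h, - (Dy/2))))).
  set (Qm := fun t => snd (Li2 (Cdiv (RtoC (- h - t)) (- h, - (Dy/2))))).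
  set (E := fun t => Dy/4*ln(Dy^2/4+t^2) + t*atan(Dy/(2*t))
     + h/2*atan(Dy/(2*t))*ln((t-h)/(t+h))
     + h/4*(2*ln(t-h)*(atan(2*t/Dy) - atan(2*h/Dy)) - 2*ln(t - -h)*(atan(2*t/Dy) - atan(2*-h/Dy)))).
  apply (is_derive_ext (fun t => E t + h/4 * (2 * Qh t - 2 * Qm t))).
  { intros t. unfold E, Qh, Qm, Ffun, zfun, Im. lra. }
  set (d1 := (atan (x/(Dy/2)) - atan (h/(Dy/2))) / (h - x)).
  set (d2 := (atan (x/(Dy/2)) - atan (-h/(Dy/2))) / (-h - x)).
  replace (x^2 * atan (Dy/(2*x)) / (x^2 - h^2))
    with ((x^2 * atan (Dy/(2*x)) / (x^2 - h^2) - h/4*(2*d1 - 2*d2)) + h/4*(2*d1 - 2*d2)) by ring.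
  apply comb3.
  3: { apply Qb_deriv; lra. }
  2: { apply Qb_deriv; lra. }
  unfold E. auto_derive.
  { repeat split; try nra. apply Rdiv_lt_0_compat; lra. }
  unfold d1, d2, Rdiv, Rminus.
  replace (atan (x * / (Dy * / 2))) with (atan (2 * x * / Dy)) by (f_equal; field; lra).
  replace (atan (h * / (Dy * / 2))) with (atan (2 * h * / Dy)) by (f_equal; field; lra).
  replace (atan (- h * / (Dy * / 2))) with (- atan (2 * h * / Dy)) by (rewrite <- atan_opp; f_equal; field; lra).
  replace (atan (2 * - h * / Dy)) with (- atan (2 * h * / Dy)) by (rewrite <- atan_opp; f_equal; field; lra).
  replace (x + - - h) with (x + h) by ring.
  replace (ln ((x + - h) * / (x + h))) with (ln (x + - h) - ln (x + h))
    by (rewrite <- ln_div; [reflexivity|lra|lra]).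
  field. repeat split; try nra.
Qed.

Lemma ln2_pos : 0 < ln 2.
Proof. pose proof ln_lt_2. lra. Qed.

Lemma inner_int (B h Dy : R) : 0 < B -> 0 < h -> 0 < Dy ->
  RInt (fun ym => log2 (1 + B / (ym ^ 2 + h ^ 2))) (- (Dy / 2)) (Dy / 2) =
  (Dy * ln (Dy^2/4 + (B + h^2)) - Dy * ln (Dy^2/4 + h^2)
   + 4 * sqrt (B + h^2) * atan (Dy / (2 * sqrt (B + h^2))) - 4 * h * atan (Dy / (2 * h))) / ln 2.
Proof.
  intros HB Hh HDy.
  pose proof ln2_pos as Hl2.
  assert (Hs : 0 < sqrt (B + h^2)) by (apply sqrt_lt_R0; nra).
  assert (Hs2 : sqrt (B + h^2) * sqrt (B + h^2) = B + h^2) by (apply sqrt_sqrt; nra).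
  set (s := sqrt (B + h^2)) in *.
  set (P := fun y => (y * ln (y^2 + s*s) - 2*y + 2*s*atan (y/s)
                     - (y * ln (y^2 + h^2) - 2*y + 2*h*atan (y/h))) / ln 2).
  apply is_RInt_unique.
  replace ((Dy * ln (Dy ^ 2 / 4 + (B + h ^ 2)) - Dy * ln (Dy ^ 2 / 4 + h ^ 2) +
            4 * s * atan (Dy / (2 * s)) - 4 * h * atan (Dy / (2 * h))) / ln 2)
    with (P (Dy/2) - P (- (Dy/2))).
  2: { unfold P. rewrite <- Hs2.
       replace ((- (Dy/2))^2) with ((Dy/2)^2) by ring.
       replace (Dy^2/4) with ((Dy/2)^2) by field.
       replace (- (Dy / 2) / s) with (- (Dy / 2 / s)) by (field; lra).
       replace (- (Dy / 2) / h) with (- (Dy / 2 / h)) by (field; lra).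
       rewrite !atan_opp.
       replace (Dy / 2 / s) with (Dy / (2 * s)) by (field; lra).
       replace (Dy / 2 / h) with (Dy / (2 * h)) by (field; lra).
       field. lra. }
  apply (is_RInt_derive (V:=R_CompleteNormedModule)).
  - intros y _. unfold P. auto_derive.
    { repeat split; try nra. }
    unfold log2.
    replace (ln (1 + B / (y ^ 2 + h ^ 2))) with (ln (y*(y*1) + s*s) - ln (y*(y*1) + h*(h*1))).
    2: { rewrite <- ln_div by nra. f_equal. rewrite Hs2. field. nra. }
    field. repeat split; try nra.
  - intros y _. apply exd_cont. unfold log2. auto_derive. repeat split; try nra.
    assert (0 < B * / (y * (y * 1) + h * (h * 1))) by (apply Rdiv_lt_0_compat; nra). lra.
Qed.

Definition Jf (alpha h Dy A x : R) : R :=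
  (Dy * ln (Dy^2/4 + (A * exp (- alpha * x) + h^2)) - Dy * ln (Dy^2/4 + h^2)
   + 4 * sqrt (A * exp (- alpha * x) + h^2) * atan (Dy / (2 * sqrt (A * exp (- alpha * x) + h^2)))
   - 4 * h * atan (Dy / (2 * h))) / ln 2.

Definition Gf (alpha h Dy A x : R) : R :=
  Dy / (alpha * ln 2) * fst (Li2 (RtoC (- A * exp (- alpha * x) / (h ^ 2 + Dy ^ 2 / 4))))
  - 4 * h * x / ln 2 * atan (Dy / (2 * h))
  - 8 / (alpha * ln 2) * Ffun Dy h (sqrt (A * exp (- alpha * x) + h ^ 2)).

Lemma comb_G (f1 f3 : R -> R) (x k1 k2 k3 d1 d3 : R) :
  is_derive f1 x d1 -> is_derive f3 x d3 ->
  is_derive (fun t => k1 * f1 t - k2 * t - k3 * f3 t) x (k1 * d1 - k2 - k3 * d3).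
Proof.
  intros H1 H3.
  apply (is_derive_minus (fun t => k1 * f1 t - k2 * t) (fun t => k3 * f3 t)).
  - apply (is_derive_minus (fun t => k1 * f1 t) (fun t => k2 * t)).
    + apply is_derive_scal. exact H1.
    + auto_derive; [exact I|ring].
  - apply is_derive_scal. exact H3.
Qed.

Lemma G_deriv (alpha h Dy A x : R) : 0 < alpha -> 0 < h -> 0 < Dy -> 0 < A ->
  is_derive (Gf alpha h Dy A) x (Jf alpha h Dy A x).
Proof.
  intros Hal Hh HDy HA.
  pose proof ln2_pos as Hl2.
  assert (HE : 0 < exp (- alpha * x)) by apply exp_pos.
  assert (HB : 0 < A * exp (- alpha * x)) by nra.
  assert (Hs : 0 < sqrt (A * exp (- alpha * x) + h^2)) by (apply sqrt_lt_R0; nra).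
  assert (Hs2 : sqrt (A * exp (- alpha * x) + h^2) ^ 2 = A * exp (- alpha * x) + h^2)
    by (apply pow2_sqrt; nra).
  assert (Hsh : h < sqrt (A * exp (- alpha * x) + h^2)).
  { apply Rsqr_incrst_0; try lra. unfold Rsqr. rewrite sqrt_sqrt by nra. nra. }
  assert (Hd3 : is_derive (fun t => Ffun Dy h (sqrt (A * exp (- alpha * t) + h ^ 2))) x
     ((- alpha * A * exp (- alpha * x) / (2 * sqrt (A * exp (- alpha * x) + h^2)))
      * (sqrt (A * exp (- alpha * x) + h^2) ^ 2 * atan (Dy / (2 * sqrt (A * exp (- alpha * x) + h^2)))
         / (sqrt (A * exp (- alpha * x) + h^2) ^ 2 - h^2)))).
  { apply (is_derive_comp (Ffun Dy h) (fun t => sqrt (A * exp (- alpha * t) + h ^ 2))).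
    - apply F_deriv; lra.
    - auto_derive; [nra|]. match goal with |- ?a = ?b => change (@eq R a b) end. replace (h*(h*1)) with (h^2) by ring. field. lra. }
  pose proof (Ga_deriv A alpha (h ^ 2 + Dy ^ 2 / 4) x HA ltac:(nra)) as Hd1.
  unfold Gf.
  apply (is_derive_ext (fun t => Dy / (alpha * ln 2) * fst (Li2 (RtoC (- A * exp (- alpha * t) / (h ^ 2 + Dy ^ 2 / 4))))
     - (4 * h / ln 2 * atan (Dy / (2 * h))) * t
     - 8 / (alpha * ln 2) * Ffun Dy h (sqrt (A * exp (- alpha * t) + h ^ 2)))).
  { intros t. unfold Rdiv. lra. }
  match type of Hd3 with is_derive _ _ ?v => set (D3 := v) in Hd3 end.
  replace (Jf alpha h Dy A x) with
    (Dy / (alpha * ln 2) * (alpha * ln (1 + A * exp (- alpha * x) / (h ^ 2 + Dy ^ 2 / 4)))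
     - 4 * h / ln 2 * atan (Dy / (2 * h)) - 8 / (alpha * ln 2) * D3).
  { apply comb_G; [exact Hd1 | exact Hd3]. }
  unfold D3, Jf.
  replace (ln (1 + A * exp (- alpha * x) / (h ^ 2 + Dy ^ 2 / 4)))
    with (ln (Dy^2/4 + (A * exp (- alpha * x) + h^2)) - ln (Dy^2/4 + h^2)).
  2: { rewrite <- ln_div by nra. f_equal. field. nra. }
  set (L1 := ln (Dy^2/4 + (A * exp (- alpha * x) + h^2))).
  set (L2 := ln (Dy^2/4 + h^2)).
  set (s := sqrt (A * exp (- alpha * x) + h ^ 2)) in *.
  set (T := atan (Dy / (2 * s))).
  set (T2 := atan (Dy / (2 * h))).
  assert (HB' : A * exp (- alpha * x) = s^2 - h^2) by (rewrite Hs2; ring).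
  replace (- alpha * A * exp (- alpha * x)) with (- alpha * (A * exp (- alpha * x))) by ring.
  rewrite HB'.
  field. repeat split; try lra.
Qed.

Theorem proposition3 (alpha h Dx Dy A : R)
  (Halpha : 0 < alpha) (Hh : 0 < h) (HDx : 0 < Dx) (HDy : 0 < Dy) (HA : 0 < A) :
  1 / (Dx * Dy) *
    RInt (fun xm => RInt (fun ym =>
            log2 (1 + A * exp (- alpha * xm) / (ym ^ 2 + h ^ 2))) (- (Dy / 2)) (Dy / 2))
         0 Dx
  =
  1 / (Dx * Dy) *
   ( Dy / (alpha * ln 2) *
       (Re (Li2 (RtoC (- A * exp (- alpha * Dx) / (h ^ 2 + Dy ^ 2 / 4))))
        - Re (Li2 (RtoC (- A / (h ^ 2 + Dy ^ 2 / 4)))))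
     - 4 * h * Dx / ln 2 * atan (Dy / (2 * h))
     - 8 / (alpha * ln 2) *
       (Ffun Dy h (sqrt (A * exp (- alpha * Dx) + h ^ 2))
        - Ffun Dy h (sqrt (A + h ^ 2))) ).
Proof.
  pose proof ln2_pos as Hl2.
  rewrite (RInt_ext _ (Jf alpha h Dy A)).
  2: { intros xm _. unfold Jf. apply inner_int; try lra.
       pose proof (exp_pos (- alpha * xm)). nra. }
  assert (Hc : forall x, Rmin 0 Dx <= x <= Rmax 0 Dx -> continuous (Jf alpha h Dy A) x).
  { intros x _. apply exd_cont. unfold Jf.
       pose proof (exp_pos (- alpha * x)).
       assert (0 < sqrt (A * exp (- alpha * x) + h ^ 2)) by (apply sqrt_lt_R0; nra).
       auto_derive. repeat split; try nra.
       apply Rgt_not_eq. apply Rmult_lt_0_compat; try lra. apply sqrt_lt_R0. nra. }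
  rewrite (is_RInt_unique _ _ _ _ (is_RInt_derive (V:=R_CompleteNormedModule)
             (Gf alpha h Dy A) (Jf alpha h Dy A) 0 Dx
             (fun x _ => G_deriv alpha h Dy A x Halpha Hh HDy HA) Hc)).
  change (minus ?a ?b) with (a - b).
  unfold Gf.
  replace (- alpha * 0) with 0 by ring. rewrite exp_0.
  replace (- A * 1 / (h ^ 2 + Dy ^ 2 / 4)) with (- A / (h ^ 2 + Dy ^ 2 / 4)) by (field; nra).
  replace (A * 1 + h ^ 2) with (A + h ^ 2) by ring.
  unfold Re. f_equal. lra.
Qed.
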